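(* Let $G$ be a $(C_4,\text{diamond})$-free graph and let $AB$ and $A'B'$ be two edges of $F_k(G)$ in the same ladder class. Then $A\triangle B=A'\triangle B'$.
   Context: $F_k(G)$ is the graph on the $k$-subsets of $V(G)$ with $A,B$ adjacent iff $A\triangle B$ is an edge of $G$. A diamond is $K_4$ minus an edge; $(C_4,\text{diamond})$-free means no induced $4$-cycle and no induced diamond. A ladder is a graph isomorphic to $K_2\square P_m$ (Cartesian product of an edge with vertices $x,y$ and a path $P_m$ with $m\ge1$ edges and vertices $v_1,\dots,v_{m+1}$); for $m\ge2$ its rungs are the edges $(x,v_i)(y,v_i)$, and for $m=1$ the rungs may be either of the two pairs of disjoint edges of the $4$-cycle. Two edges $e,f$ of a graph $F$ are connected by a ladder if some induced subgraph of $F$ isomorphic to a ladder has $e$ and $f$ as rungs. The ladder classes of $F$ are the equivalence classes of the (smallest equivalence relation containing the) relation ''connected by a ladder'' on $E(F)$. *)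

(* Defs.v *)
From Stdlib Require Import Relations.
From mathcomp Require Import all_boot.
Set Implicit Arguments. Unset Strict Implicit. Unset Printing Implicit Defensive.

Definition simple_graph (T : finType) (g : rel T) : Prop :=
  symmetric g /\ irreflexive g.

Definition C4_free (T : finType) (g : rel T) : Prop :=
  ~ exists a b c d : T,
      [/\ uniq [:: a; b; c; d],
          [&& g a b, g b c, g c d & g d a],
          ~~ g a c & ~~ g b d].

Definition diamond_free (T : finType) (g : rel T) : Prop :=
  ~ exists a b c d : T,
      [/\ uniq [:: a; b; c; d],
          [&& g a b, g b c, g c d, g d a & g a c] & ~~ g b d].

Definition symdiff (T : finType) (A B : {set T}) : {set T} :=
  (A :\: B) :|: (B :\: A).

Definition is_edge (T : finType) (g : rel T) (S : {set T}) : Prop :=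
  exists u v, g u v /\ S = [set u; v].

(* Adjacency of the k-token graph F_k(G), on vertex type {set T}
   (only k-subsets are vertices). *)
Definition tok_adj (T : finType) (g : rel T) (k : nat) (A B : {set T}) : Prop :=
  [/\ #|A| = k, #|B| = k & is_edge g (symdiff A B)].

(* Adjacency of the ladder K_2 \square P_m on bool * 'I_(m+1). *)
Definition ladder_adj (m : nat) (p q : bool * 'I_m.+1) : bool :=
  ((p.1 == q.1) && ((p.2.+1 == q.2 :> nat) || (q.2.+1 == p.2 :> nat)))
  || ((p.1 != q.1) && (p.2 == q.2)).

(* For m = 1 every isomorphism of the 4-cycle is allowed, so both pairs of
   disjoint edges arise as rungs. *)
Definition ladder_connected (V : finType) (F : V -> V -> Prop)
    (e f : {set V}) : Prop :=
  exists m : nat, exists phi : bool * 'I_m.+1 -> V,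
    [/\ 1 <= m, injective phi,
        (forall p q, F (phi p) (phi q) <-> ladder_adj p q) &
        exists i j : 'I_m.+1,
          e = [set phi (false, i); phi (true, i)] /\
          f = [set phi (false, j); phi (true, j)]].

Definition same_ladder_class (V : finType) (F : V -> V -> Prop)
    (e f : {set V}) : Prop :=
  clos_refl_sym_trans _ (ladder_connected F) e f.

(* Main.v *)
Require Import Defs.
From Stdlib Require Import Relations.
From mathcomp Require Import all_boot zify.
Set Implicit Arguments. Unset Strict Implicit. Unset Printing Implicit Defensive.

Section Aux.
Variable T : finType.
Implicit Types (X Y : {set T}) (g : rel T).

Lemma symdiffC X Y : symdiff X Y = symdiff Y X.
Proof. by rewrite /symdiff setUC. Qed.

Lemma symdiffxx X : symdiff X X = set0.
Proof. by rewrite /symdiff setDv setU0. Qed.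

Lemma inSD X Y z : (z \in symdiff X Y) = ((z \in X) != (z \in Y)).
Proof. by rewrite /symdiff !inE; case: (z \in X); case: (z \in Y). Qed.

Lemma L1 X Y u v : symdiff X Y = [set u; v] -> #|X| = #|Y| -> u \in X -> v \notin X.
Proof.
move=> E C uX; apply/negP => vX.
have uS : u \in symdiff X Y by rewrite E !inE eqxx.
have uY : u \notin Y by move: uS; rewrite inSD uX; case: (u \in Y).
have : Y \proper X.
  rewrite properE; apply/andP; split.
    apply/subsetP => y yY; apply/negPn/negP => yX.
    have : y \in symdiff X Y by rewrite inSD yY (negbTE yX).
    by rewrite E !inE => /orP [] /eqP E1; rewrite E1 in yX; rewrite ?uX ?vX in yX.
  by apply/subsetPn; exists u.
by move/proper_card; rewrite C ltnn.
Qed.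

Lemma L2 X Y u v : symdiff X Y = [set u; v] -> u \in X -> v \notin X -> Y = v |: (X :\ u).
Proof.
move=> E uX vX; apply/setP => z.
have := inSD X Y z; rewrite E !inE.
have uv : u != v by apply: contraNneq vX => <-.
case: (eqVneq z u) => [->|zu]; first by rewrite uX (negbTE uv) /=; case: (u \in Y).
case: (eqVneq z v) => [->|zv] /=; first by rewrite (negbTE vX); case: (v \in Y).
by case: (z \in X); case: (z \in Y).
Qed.

Lemma adj_move g k X Y : simple_graph g -> tok_adj g k X Y ->
  exists u v, [/\ g u v, u \in X, v \notin X & Y = v |: (X :\ u)].
Proof.
move=> [sy irr] [cX cY [u [v [guv E]]]].
have C : #|X| = #|Y| by rewrite cX cY.
case uX : (u \in X).
  have vX := L1 E C uX.
  by exists u, v; split => //; apply: L2.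
have uS : u \in symdiff Y X by rewrite symdiffC E !inE eqxx.
have uY : u \in Y by move: uS; rewrite inSD uX; case: (u \in Y).
have E' : symdiff Y X = [set u; v] by rewrite symdiffC.
have vY := L1 E' (esym C) uY.
have vS : v \in symdiff X Y by rewrite E !inE eqxx orbT.
have vX : v \in X by move: vS; rewrite inSD (negbTE vY); case: (v \in X).
have E2 : symdiff X Y = [set v; u] by rewrite E setUC.
exists v, u; split => //; first by rewrite sy.
  by rewrite uX.
by apply: L2 => //; rewrite uX.
Qed.

Lemma symdiff_move X a b : a \in X -> b \notin X -> symdiff X (b |: (X :\ a)) = [set a; b].
Proof.
move=> aX bX; apply/setP => z; rewrite inSD !inE.
have ab : a != b by apply: contraNneq bX => <-.
case: (eqVneq z a) => [->|za]; first by rewrite aX (negbTE ab).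
case: (eqVneq z b) => [->|zb] /=; first by rewrite (negbTE bX).
by case: (z \in X).
Qed.

Lemma cyc4 g w x y z : simple_graph g -> C4_free g -> diamond_free g ->
  uniq [:: w; x; y; z] -> g w x -> g x y -> g y z -> g z w -> ~~ g w y -> False.
Proof.
move=> [sy irr] c4 dm U h1 h2 h3 h4 n.
case gxz : (g x z).
  apply: dm; exists x, y, z, w; split => //.
    by move: U; rewrite -(rot_uniq 1).
  by rewrite h1 h2 h3 h4 gxz.
  by rewrite sy.
apply: c4; exists w, x, y, z; split => //; first by rewrite h1 h2 h3 h4.
by rewrite gxz.
Qed.
End Aux.

Ltac bsimp := rewrite ?inE /=; repeat (match goal with
 | H : is_true (?x != ?y) |- context [?x == ?y] => rewrite (negbTE H)
 | H : is_true (?x != ?y) |- context [?y == ?x] => rewrite [y == x]eq_sym (negbTE H)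
 | H : is_true (?x \in ?S) |- context [?x \in ?S] => rewrite H
 | H : is_true (?x \notin ?S) |- context [?x \in ?S] => rewrite (negbTE H)
 | |- context [?x == ?x] => rewrite eqxx
 end; rewrite /= ?orbT ?andbT ?orbF ?andbF).

Ltac ecyc w x y z := exfalso; match goal with sg : simple_graph _, c4 : C4_free _, dm : diamond_free _ |- _ =>
  apply: (cyc4 (w:=w) (x:=x) (y:=y) (z:=z) sg c4 dm); [rewrite /= !inE; bsimp | ..]; 
  try (by []); try (by rewrite sg.1) end.

Ltac brute := bsimp; try done;
  match goal with
  | |- context [?x == ?y] => case: (eqVneq x y) => [?|?]; [subst x|]; brute
  | |- context [?x \in ?S] => case: (x \in S); brute
  end.

Tactic Notation "force" ident(x) constr(y) tactic(t) :=
  have : x = y; [apply/eqP; apply/negPn/negP => ?; t; brute | move=> ?; subst x].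

Lemma square (T : finType) (g : rel T) k (X0 Y0 X1 Y1 : {set T}) :
 simple_graph g -> C4_free g -> diamond_free g ->
 tok_adj g k X0 Y0 -> tok_adj g k X0 X1 -> tok_adj g k Y0 Y1 -> tok_adj g k X1 Y1 ->
 ~ tok_adj g k X0 Y1 -> ~ tok_adj g k X1 Y0 -> X0 != Y1 -> X1 != Y0 ->
 symdiff X0 Y0 = symdiff X1 Y1.
Proof.
move=> sg c4 dm H00 H01 H02 H03 N1 N2 D1 D2.
have NA : forall (X Y : {set T}) x y, #|X| = k -> #|Y| = k -> ~ tok_adj g k X Y ->
   symdiff X Y = [set x; y] -> ~~ g x y.
  move=> X Y x y cX cY N E; apply/negP => gxy; apply: N; split => //.
  by exists x, y.
have [cX0 cY0 _] := H00. have [cX1 cY1 _] := H03.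
have NX0Y1 : forall x y, symdiff X0 Y1 = [set x; y] -> ~~ g x y.
  by move=> x y; apply: NA.
have NX1Y0 : forall x y, symdiff X1 Y0 = [set x; y] -> ~~ g x y.
  by move=> x y; apply: NA.
clear cX0 cY0 cX1 cY1.
have [a [b [gab aX bX EY0]]] := adj_move sg H00.
have [c [d [gcd cX dX EX1]]] := adj_move sg H01.
have [e [f [gef eY fY EY1]]] := adj_move sg H02.
have [p [q [gpq pX qX EY1']]] := adj_move sg H03.
rewrite {1}EY0 symdiff_move // EY1' symdiff_move //.
have Hpt : forall z, (z \in f |: (Y0 :\ e)) = (z \in q |: (X1 :\ p)) by move=> z; rewrite -EY1 -EY1'.
clear EY1' H00 H01 H02 H03 N1 N2 NA.
subst Y1 Y0 X1.
have irr := sg.2.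
have ab : a != b by apply: contraTneq gab => ->; rewrite irr.
have cd : c != d by apply: contraTneq gcd => ->; rewrite irr.
have ef : e != f by apply: contraTneq gef => ->; rewrite irr.
have pq : p != q by apply: contraTneq gpq => ->; rewrite irr.
have ad : a != d by apply: contraNneq dX => <-.
have cb : c != b by apply: contraNneq bX => <-.
have ha := Hpt a; have hb := Hpt b; have hc := Hpt c; have hd := Hpt d.
have he := Hpt e; have hf := Hpt f; have hp := Hpt p; have hq := Hpt q.
case: (eqVneq a c) => [Eac|ac]; [subst c; case: (eqVneq b d) => [Ebd|bd] | case: (eqVneq b d) => [Ebd|bd]].
- by subst d; rewrite eqxx in D2.
- have nbd : ~~ g b d.
    apply: NX1Y0; apply/setP => z; rewrite inSD !inE.
    case: (eqVneq z b) => [->|zb]; first by bsimp.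
    case: (eqVneq z d) => [->|zd]; first by bsimp.
    bsimp; by case: (z \in X0).
  case: (eqVneq e b) => [Eeb|neb].
    subst e.
    have : q = f.
      apply/eqP; apply/negPn/negP => qf.
      move: (Hpt a) (Hpt b) (Hpt d) (Hpt f) (Hpt q) (Hpt p) eY fY pX qX.
      brute.
    move=> Eqf; subst q.
    have : p = d.
      apply/eqP; apply/negPn/negP => pd.
      move: (Hpt a) (Hpt b) (Hpt d) (Hpt f) (Hpt p) eY fY pX qX.
      brute.
    move=> Epd; subst p.
    have fa : f != a.
      apply: contraNneq D1 => E; subst f; apply/eqP/setP => z; brute.
    by ecyc b f d a.
  force q b (move: (Hpt a) (Hpt b) (Hpt d) (Hpt e) (Hpt f) (Hpt q) (Hpt p) eY fY pX qX).
  force p e (move: (Hpt a) (Hpt b) (Hpt d) (Hpt e) (Hpt f) (Hpt p) eY fY pX qX).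
  force f d (move: (Hpt a) (Hpt b) (Hpt d) (Hpt e) (Hpt f) eY fY pX qX).
  ecyc b e d a; move: (Hpt a) (Hpt b) (Hpt d) (Hpt e) eY fY pX qX; brute.
- subst d.
  have nac : ~~ g a c.
    by apply: NX1Y0; apply/setP => z; rewrite inSD; brute.
  case: (eqVneq e c) => [Eec|nec].
    subst e.
    force q f (move: (ha) (hb) (hc) (hd) (he) (hf) (hp) (hq) (eY) (fY) (pX) (qX)).
    force p a (move: (ha) (hb) (hc) (hd) (he) (hf) (hp) (hq) (eY) (fY) (pX) (qX)).
    ecyc a b c f; move: (ha) (hb) (hc) (hd) (he) (hf) (hp) (hq) (eY) (fY) (pX) (qX); brute.
  force q c (move: (ha) (hb) (hc) (hd) (he) (hf) (hp) (hq) (eY) (fY) (pX) (qX)).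
  force p e (move: (ha) (hb) (hc) (hd) (he) (hf) (hp) (hq) (eY) (fY) (pX) (qX)).
  force f a (move: (ha) (hb) (hc) (hd) (he) (hf) (hp) (hq) (eY) (fY) (pX) (qX)).
  have eb : e != b.
    by apply: contraNneq D1 => E; subst e; apply/eqP/setP => z; brute.
  ecyc a b c e; move: (ha) (hb) (hc) (hd) (he) (hf) (hp) (hq) (eY) (fY) (pX) (qX); brute.
- have ca : c != a by rewrite eq_sym.
  case: (eqVneq e b) => [Eeb|neb].
    subst e.
    force q c (move: (ha) (hb) (hc) (hd) (he) (hf) (hp) (hq) (eY) (fY) (pX) (qX)).
    have fa : f != a.
      by apply: contraNneq D1 => E; subst f; apply/eqP/setP => z; brute.
    force p a (move: (ha) (hb) (hc) (hd) (he) (hf) (hp) (hq) (eY) (fY) (pX) (qX)).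
    force f d (move: (ha) (hb) (hc) (hd) (he) (hf) (hp) (hq) (eY) (fY) (pX) (qX)).
    have nad : ~~ g a d.
      by apply: NX0Y1; apply/setP => z; rewrite inSD; brute.
    ecyc a b d c; move: (ha) (hb) (hc) (hd) (he) (hf) (hp) (hq) (eY) (fY) (pX) (qX); brute.
  force q b (move: (ha) (hb) (hc) (hd) (he) (hf) (hp) (hq) (eY) (fY) (pX) (qX)).
  force e c (move: (ha) (hb) (hc) (hd) (he) (hf) (hp) (hq) (eY) (fY) (pX) (qX)).
  case: (eqVneq f d) => [Efd|nfd].
    subst f. force p a (move: (ha) (hb) (hc) (hd) (he) (hf) (hp) (hq) (eY) (fY) (pX) (qX)). done.
  force p d (move: (ha) (hb) (hc) (hd) (he) (hf) (hp) (hq) (eY) (fY) (pX) (qX)).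
  force f a (move: (ha) (hb) (hc) (hd) (he) (hf) (hp) (hq) (eY) (fY) (pX) (qX)).
  have nbc : ~~ g b c.
    by apply: NX0Y1; apply/setP => z; rewrite inSD; brute.
  ecyc b d c a; move: (ha) (hb) (hc) (hd) (he) (hf) (hp) (hq) (eY) (fY) (pX) (qX); brute.
Qed.

Definition label (T : finType) (e : {set {set T}}) : {set T} :=
  [set x | [exists X in e, exists Y in e, x \in symdiff X Y]].

Lemma label2 (T : finType) (A B : {set T}) : label [set A; B] = symdiff A B.
Proof.
apply/setP => x; rewrite inE; apply/existsP/idP.
  move=> [X /andP [XA /existsP [Y /andP [YB xin]]]].
  rewrite !inE in XA YB; move: XA YB => /orP [] /eqP EX /orP [] /eqP EY; subst X Y;
    rewrite ?symdiffxx ?in_set0 // in xin; by rewrite symdiffC.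
move=> xin; exists A; rewrite in_set2 eqxx /=; apply/existsP; exists B.
by rewrite in_set2 eqxx orbT xin.
Qed.

Lemma ladder_label (T : finType) (g : rel T) k e f :
  simple_graph g -> C4_free g -> diamond_free g ->
  ladder_connected (tok_adj g k) e f -> label e = label f.
Proof.
move=> sg c4 dm [m [phi [m1 inj H [i [j [-> ->]]]]]].
rewrite !label2.
have step : forall n (h : n.+1 < m.+1),
  symdiff (phi (false, Ordinal (ltnW h))) (phi (true, Ordinal (ltnW h))) =
  symdiff (phi (false, Ordinal h)) (phi (true, Ordinal h)).
  move=> n h; apply: (square sg c4 dm).
  - by apply/H; rewrite /ladder_adj /= eqxx.
  - by apply/H; rewrite /ladder_adj /= eqxx.
  - by apply/H; rewrite /ladder_adj /= eqxx.
  - by apply/H; rewrite /ladder_adj /= eqxx.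
  - move/H; rewrite /ladder_adj /= => /eqP [] E; lia.
  - move/H; rewrite /ladder_adj /= => /eqP [] E; lia.
  - by apply/negP => /eqP /inj.
  - by apply/negP => /eqP /inj.
have R0 : forall n (hn : n < m.+1),
  symdiff (phi (false, Ordinal hn)) (phi (true, Ordinal hn)) =
  symdiff (phi (false, ord0)) (phi (true, ord0)).
  elim=> [|n IH] hn; first by rewrite (_ : Ordinal hn = ord0) //; apply: val_inj.
  by rewrite -(step n hn) IH.
by case: i => [i hi]; case: j => [j hj]; rewrite !R0.
Qed.

Unset Implicit Arguments.

Theorem proposition23 (T : finType) (g : rel T) (k : nat)
    (A B A' B' : {set T}) :
  simple_graph g -> C4_free g -> diamond_free g ->
  tok_adj g k A B -> tok_adj g k A' B' ->
  same_ladder_class (tok_adj g k) [set A; B] [set A'; B'] ->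
  symdiff A B = symdiff A' B'.
Proof.
move=> sg c4 dm _ _ Hc.
rewrite -(label2 A B) -(label2 A' B').
elim: Hc => [x y /(ladder_label sg c4 dm) //|x //|x y _ -> //|x y z _ -> _ -> //].
Qed.
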